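(* Let $\tau=\{\tau_1,\dots,\tau_n\}$ with $\tau_i=(T_i,C_i,D_i)$, $0<C_i\le D_i\le T_i$, let $m'$ be a positive integer, and let $R=\langle\Pi,\Theta,m'\rangle$ be an MPR model with $U_\tau<\Theta/\Pi$, where $U_\tau=\sum_{i=1}^n C_i/T_i$. Fix $k\in\{1,\dots,n\}$. Define - $C_\Sigma$ as the sum of the $m'-1$ largest values among $C_1,\dots,C_n$; - $U=\sum_{i=1}^n (T_i-D_i)\,C_i/T_i$; - $B=\frac{\Theta}{\Pi}\big[2+2(\Pi-\Theta/m')\big]$. If there is a real $A_k\ge0$ with $\mathrm{dem}_k(A_k+D_k,m')>\mathrm{sbf}_R(A_k+D_k)$, then there is such an $A_k\ge 0$ that also satisfies $$A_k<\frac{C_\Sigma+m'C_k-D_k\left(\frac{\Theta}{\Pi}-U_\tau\right)+U+B}{\frac{\Theta}{\Pi}-U_\tau}.$$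
   Context: MPR model: $R=\langle\Pi,\Theta,m'\rangle$ with $\Pi>0$, $m'$ a positive integer and $0\le\Theta\le m'\Pi$. A supply pattern of $R$ is a piecewise-constant function $s:[0,\infty)\to\{0,1,\dots,m'\}$ with $\int_{j\Pi}^{(j+1)\Pi}s(t)\,dt=\Theta$ for every integer $j\ge0$. Then $$\mathrm{sbf}_R(t)=\inf\Big\{\int_{t_0}^{t_0+t}s(u)\,du: s\text{ a supply pattern of }R,\ t_0\ge0\Big\}.$$ Demand bound: for $t\ge0$ let $$CI_i(t)=\min\Big\{C_i,\max\Big\{0,\;t-\Big\lfloor\tfrac{t+T_i-D_i}{T_i}\Big\rfloor T_i\Big\}\Big\},\qquad W_i(t)=\Big\lfloor\tfrac{t+T_i-D_i}{T_i}\Big\rfloor C_i+CI_i(t).$$ Fix $k$ and $A\ge0$, and put $t=A+D_k$. For $i\ne k$ define $$\bar I_i=\min\{W_i(t),\,t-C_k\},\qquad \hat I_i=\min\{W_i(t)-CI_i(t),\,t-C_k\},$$ and for $i=k$ define $$\bar I_k=\min\{W_k(t)-C_k,\,A\},\qquad \hat I_k=\min\{W_k(t)-C_k-CI_k(t),\,A\}.$$ Then $$\mathrm{dem}_k(A+D_k,m')=m'C_k+\sum_{i=1}^n\hat I_i+S,$$ where $S$ is the sum of the $m'-1$ largest values among $\{\bar I_i-\hat I_i\}_{i=1}^n$ (all of them if $n\le m'-1$; $S=0$ if $m'=1$). $C_\Sigma$ is defined analogously: the sum of all $C_i$ if $n\le m'-1$, and $0$ if $m'=1$. *)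

(* Defs.v *)
From Stdlib Require Import Reals List.
From Coquelicot Require Import Coquelicot.
Open Scope R_scope.

Definition sumR (n : nat) (f : nat -> R) : R :=
  fold_right Rplus 0 (map f (seq 0 n)).

Fixpoint insert_desc (x : R) (l : list R) : list R :=
  match l with
  | nil => x :: nil
  | y :: l' => if Rle_dec y x then x :: y :: l' else y :: insert_desc x l'
  end.
Fixpoint sort_desc (l : list R) : list R :=
  match l with nil => nil | x :: l' => insert_desc x (sort_desc l') end.

Definition sum_largest (p n : nat) (f : nat -> R) : R :=
  fold_right Rplus 0 (firstn p (sort_desc (map f (seq 0 n)))).

Definition floorR (x : R) : R := IZR (Int_part x).

Definition piecewise_constant (s : R -> R) : Prop :=
  forall a b, 0 <= a -> a <= b ->
    exists l : list R, forall x y, a <= x -> x <= y -> y <= b ->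
      (forall p, In p l -> ~ (x <= p <= y)) -> s x = s y.

Definition supply_pattern (Pi Theta : R) (m : nat) (s : R -> R) : Prop :=
  piecewise_constant s /\
  (forall t, 0 <= t -> exists v : nat, (v <= m)%nat /\ s t = INR v) /\
  (forall j : nat, RInt s (INR j * Pi) (INR (S j) * Pi) = Theta).

Definition sbf (Pi Theta : R) (m : nat) (t : R) : R :=
  real (Glb_Rbar (fun x => exists s t0, supply_pattern Pi Theta m s /\
                            0 <= t0 /\ x = RInt s t0 (t0 + t))).

Definition nJ (T D : R) (t : R) : R := floorR ((t + T - D) / T).
Definition CI (T C D : R) (t : R) : R :=
  Rmin C (Rmax 0 (t - nJ T D t * T)).
Definition W (T C D : R) (t : R) : R := nJ T D t * C + CI T C D t.

Definition Ibar (T C D : nat -> R) (k : nat) (A : R) (i : nat) : R :=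
  let t := A + D k in
  if Nat.eqb i k then Rmin (W (T k) (C k) (D k) t - C k) A
  else Rmin (W (T i) (C i) (D i) t) (t - C k).
Definition Ihat (T C D : nat -> R) (k : nat) (A : R) (i : nat) : R :=
  let t := A + D k in
  if Nat.eqb i k then Rmin (W (T k) (C k) (D k) t - C k - CI (T k) (C k) (D k) t) A
  else Rmin (W (T i) (C i) (D i) t - CI (T i) (C i) (D i) t) (t - C k).

(* dem_k(A + D_k, m) *)
Definition dem (n : nat) (T C D : nat -> R) (k : nat) (A : R) (m : nat) : R :=
  INR m * C k + sumR n (Ihat T C D k A)
  + sum_largest (m - 1) n (fun i => Ibar T C D k A i - Ihat T C D k A i).

(* Main.v *)
Require Import Defs.
From Stdlib Require Import Reals List.
From Coquelicot Require Import Coquelicot.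
From Stdlib Require Import Lra Lia Sorting.Sorted ClassicalEpsilon.
Open Scope R_scope.

Definition Rge' (a b : R) : Prop := b <= a.

Lemma insert_Forall (P : R -> Prop) x s : P x -> List.Forall P s -> List.Forall P (insert_desc x s).
Proof.
  intros Hx Hs; induction Hs as [|y s Hy Hs IH]; simpl.
  - constructor; auto.
  - destruct (Rle_dec y x); constructor; auto.
Qed.

Lemma insert_sorted x s : StronglySorted Rge' s -> StronglySorted Rge' (insert_desc x s).
Proof.
  induction s as [|y s IH]; simpl; intros H.
  - constructor; constructor.
  - apply StronglySorted_inv in H as [H1 H2].
    destruct (Rle_dec y x) as [h|h].
    + constructor; [constructor; auto|].
      constructor; [exact h|]. eapply Forall_impl; [|exact H2]. unfold Rge'; intros; lra.
    + constructor; auto. apply insert_Forall; auto. unfold Rge'; lra.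
Qed.

Lemma sort_sorted l : StronglySorted Rge' (sort_desc l).
Proof. induction l; simpl; [constructor|]; apply insert_sorted; auto. Qed.

Lemma ins_le_cons x y s : StronglySorted Rge' (y :: s) -> x <= y ->
  List.Forall2 Rle (insert_desc x s) (y :: s).
Proof.
  revert y; induction s as [|z s IH]; intros y Hs Hxy; simpl.
  - constructor; auto.
  - apply StronglySorted_inv in Hs as [Hs Hf].
    inversion Hf as [|? ? Hzy _]; subst. unfold Rge' in Hzy.
    destruct (Rle_dec z x) as [h|h].
    + constructor; auto. constructor; [lra|]. clear. induction s; constructor; auto; lra.
    + constructor; auto. apply IH; auto. lra.
Qed.

Lemma Forall2_refl_R s : List.Forall2 Rle s s.
Proof. induction s; constructor; auto; lra. Qed.

Lemma ins_mono_x x1 x2 s : StronglySorted Rge' s -> x1 <= x2 ->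
  List.Forall2 Rle (insert_desc x1 s) (insert_desc x2 s).
Proof.
  induction s as [|y s IH]; intros Hs Hx; simpl.
  - constructor; auto.
  - destruct (Rle_dec y x1) as [h1|h1]; destruct (Rle_dec y x2) as [h2|h2].
    + constructor; auto. apply Forall2_refl_R.
    + lra.
    + constructor; [lra|]. apply ins_le_cons; auto. lra.
    + constructor; [lra|]. apply IH; auto. apply StronglySorted_inv in Hs; tauto.
Qed.

Lemma cons_le_ins x y1 s1 s2 : StronglySorted Rge' (y1 :: s1) -> List.Forall2 Rle s1 s2 -> y1 <= x ->
  List.Forall2 Rle (y1 :: s1) (insert_desc x s2).
Proof.
  intros Hs H12; revert y1 Hs; induction H12 as [|z1 z2 s1 s2 Hz H12 IH]; intros y1 Hs Hy; simpl.
  - constructor; auto.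
  - apply StronglySorted_inv in Hs as [Hs Hf].
    inversion Hf as [|? ? Hzy _]; subst. unfold Rge' in Hzy.
    destruct (Rle_dec z2 x) as [h|h].
    + constructor; auto.
    + constructor; [lra|]. apply IH; auto. lra.
Qed.

Lemma ins_mono_s x s1 s2 : StronglySorted Rge' s1 -> StronglySorted Rge' s2 ->
  List.Forall2 Rle s1 s2 -> List.Forall2 Rle (insert_desc x s1) (insert_desc x s2).
Proof.
  intros H1 H2 H12; induction H12 as [|y1 y2 s1 s2 Hy H12 IH]; simpl.
  - constructor; auto; lra.
  - pose proof H1 as H1'; pose proof H2 as H2'.
    apply StronglySorted_inv in H1 as [H1 _]; apply StronglySorted_inv in H2 as [H2 _].
    destruct (Rle_dec y1 x) as [h1|h1]; destruct (Rle_dec y2 x) as [h2|h2].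
    + constructor; [lra|]. constructor; auto.
    + constructor; [lra|]. apply cons_le_ins; auto.
    + lra.
    + constructor; auto.
Qed.

Lemma Forall2_trans_R a b c : List.Forall2 Rle a b -> List.Forall2 Rle b c -> List.Forall2 Rle a c.
Proof.
  intros H; revert c; induction H; intros c H'; inversion H'; subst; constructor; eauto; lra.
Qed.

Lemma sort_mono l1 l2 : List.Forall2 Rle l1 l2 -> List.Forall2 Rle (sort_desc l1) (sort_desc l2).
Proof.
  induction 1; simpl; [constructor|].
  eapply Forall2_trans_R.
  - apply ins_mono_s; [apply sort_sorted|apply sort_sorted|eauto].
  - apply ins_mono_x; [apply sort_sorted|auto].
Qed.

Lemma sum_firstn_mono p l1 l2 : List.Forall2 Rle l1 l2 ->
  fold_right Rplus 0 (firstn p l1) <= fold_right Rplus 0 (firstn p l2).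
Proof.
  intros H; revert p; induction H; intros p; destruct p; simpl; try lra.
  specialize (IHForall2 p); lra.
Qed.

Lemma sum_largest_mono p n f g : (forall i, (i < n)%nat -> f i <= g i) ->
  sum_largest p n f <= sum_largest p n g.
Proof.
  intros H; unfold sum_largest; apply sum_firstn_mono, sort_mono.
  assert (forall i, In i (seq 0 n) -> f i <= g i) as H'.
  { intros i Hi; apply in_seq in Hi; apply H; lia. }
  induction (seq 0 n); simpl; constructor.
  - apply H'; simpl; auto.
  - apply IHl; intros; apply H'; simpl; auto.
Qed.

Lemma sumR_le n f g : (forall i, (i < n)%nat -> f i <= g i) -> sumR n f <= sumR n g.
Proof.
  intros H; unfold sumR.
  assert (forall i, In i (seq 0 n) -> f i <= g i) as H'.
  { intros i Hi; apply in_seq in Hi; apply H; lia. }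
  induction (seq 0 n); simpl; [lra|].
  assert (f a <= g a) by (apply H'; simpl; auto).
  assert (fold_right Rplus 0 (map f l) <= fold_right Rplus 0 (map g l)) by (apply IHl; intros; apply H'; simpl; auto).
  lra.
Qed.

Lemma sumR_lin n a f g : sumR n (fun i => a * f i + g i) = a * sumR n f + sumR n g.
Proof. unfold sumR; induction (seq 0 n); simpl; [lra|]. rewrite IHl; lra. Qed.

Lemma step_ex_RInt (s : R -> R) l : forall a b, a <= b ->
  (forall x y, a < x -> x <= y -> y < b -> (forall p, In p l -> ~ (x <= p <= y)) -> s x = s y) ->
  ex_RInt s a b.
Proof.
  induction l as [|p l IH]; intros a b Hab H.
  - destruct (Req_dec a b) as [e|ne]; [subst; apply ex_RInt_point|].
    assert (E : ex_RInt (fun _ => s ((a+b)/2)) a b) by apply ex_RInt_const.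
    refine (ex_RInt_ext _ _ a b _ E).
    rewrite Rmin_left, Rmax_right by lra. intros x Hx.
    destruct (Rle_dec x ((a+b)/2)).
    + symmetry; apply H; try lra. intros p [].
    + apply H; try lra. intros p [].
  - destruct (Rlt_dec a p) as [h1|h1]; [destruct (Rlt_dec p b) as [h2|h2]|].
    + apply ex_RInt_Chasles with p.
      * apply IH; [lra|]. intros x y Hx Hxy Hy Hp. apply H; try lra.
        intros q Hq' Hc; destruct Hq' as [Hq|Hq]; [subst; lra|]; exact (Hp q Hq Hc).
      * apply IH; [lra|]. intros x y Hx Hxy Hy Hp. apply H; try lra.
        intros q Hq' Hc; destruct Hq' as [Hq|Hq]; [subst; lra|]; exact (Hp q Hq Hc).
    + apply IH; auto. intros x y Hx Hxy Hy Hp; apply H; try lra; intros q Hq' Hc; destruct Hq' as [Hq|Hq]; [subst; lra|]; exact (Hp q Hq Hc).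
    + apply IH; auto. intros x y Hx Hxy Hy Hp; apply H; try lra; intros q Hq' Hc; destruct Hq' as [Hq|Hq]; [subst; lra|]; exact (Hp q Hq Hc).
Qed.

Lemma pc_ex_RInt s a b : piecewise_constant s -> 0 <= a -> a <= b -> ex_RInt s a b.
Proof.
  intros Hpc Ha Hab. destruct (Hpc a b Ha Hab) as [l Hl].
  apply step_ex_RInt with l; auto. intros; apply Hl; auto; lra.
Qed.

Lemma scalR (a b : R) : scal a b = a * b.
Proof. reflexivity. Qed.
Lemma plusR (a b : R) : plus a b = a + b.
Proof. reflexivity. Qed.

Section Supply.
Variables (Pi Theta : R) (m : nat) (s : R -> R).
Hypothesis Hsp : supply_pattern Pi Theta m s.
Hypothesis HPi : 0 < Pi.
Hypothesis Hm : (0 < m)%nat.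
Hypothesis HTh : 0 <= Theta.
Hypothesis HTh2 : Theta <= INR m * Pi.

Let M := INR m.

Lemma exs a b : 0 <= a -> a <= b -> ex_RInt s a b.
Proof. intros; apply pc_ex_RInt; auto. apply Hsp. Qed.

Lemma chasles a b c : 0 <= a -> a <= b -> b <= c -> RInt s a c = RInt s a b + RInt s b c.
Proof. intros; rewrite <- RInt_Chasles with (b := b); try apply exs; try lra. reflexivity. Qed.

Lemma int_bounds a b : 0 <= a -> a <= b -> 0 <= RInt s a b <= M * (b - a).
Proof.
  intros Ha Hab. destruct Hsp as [_ [Hv _]]. split.
  - replace 0 with (RInt (fun _ => 0) a b).
    2:{ rewrite RInt_const, scalR; lra. }
    apply RInt_le; auto; [apply ex_RInt_const|apply exs; auto|].
    intros x Hx. destruct (Hv x) as [v [_ ->]]; [lra|apply pos_INR].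
  - replace (M * (b - a)) with (RInt (fun _ => M) a b).
    2:{ rewrite RInt_const, scalR; lra. }
    apply RInt_le; auto; [apply exs; auto|apply ex_RInt_const|].
    intros x Hx. destruct (Hv x) as [v [Hvm ->]]; [lra|]. apply le_INR; auto.
Qed.

Lemma F_period j : RInt s 0 (INR j * Pi) = INR j * Theta.
Proof.
  induction j.
  - simpl. rewrite !Rmult_0_l. rewrite RInt_point. reflexivity.
  - rewrite (chasles 0 (INR j * Pi)); try (rewrite ?S_INR; nra).
    + rewrite IHj. destruct Hsp as [_ [_ Hp]]. rewrite Hp. rewrite S_INR; lra.
    + pose proof (pos_INR j); nra.
Qed.

Lemma arith_c u v w : 0 <= u <= Pi -> 0 <= v <= M * u -> 0 <= w <= M * (Pi - u) -> v + w = Theta ->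
  Rabs (v - Theta * u / Pi) <= Theta - Theta * Theta / (M * Pi).
Proof.
  intros Hu Hv Hw Hs.
  assert (HM : 0 < M) by (apply lt_0_INR; auto).
  assert (HMP : 0 < M * Pi) by nra.
  assert (E1 : v - Theta * u / Pi = (M * Pi * v - M * Theta * u) / (M * Pi)) by (field; lra).
  assert (E2 : Theta - Theta * Theta / (M * Pi) = (M * Pi * Theta - Theta * Theta) / (M * Pi)) by (field; lra).
  rewrite E1, E2. rewrite Rabs_div by lra. rewrite (Rabs_right (M * Pi)) by lra.
  apply Rmult_le_compat_r; [left; apply Rinv_0_lt_compat; lra|].
  apply Rabs_le. split.
  - destruct (Rle_dec (M * (Pi - u)) Theta).
    + assert (0 <= (Theta - M * (Pi - u)) * (M * Pi - Theta)) by (apply Rmult_le_pos; lra).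
      assert (M * Pi * (Theta - M * (Pi - u)) <= M * Pi * v) by (apply Rmult_le_compat_l; lra).
      nra.
    + assert (0 <= Theta * (M * (Pi - u) - Theta)) by (apply Rmult_le_pos; lra).
      assert (0 <= M * Pi * v) by (apply Rmult_le_pos; lra). nra.
  - destruct (Rle_dec (M * u) Theta).
    + assert (0 <= (Theta - M * u) * (M * Pi - Theta)) by (apply Rmult_le_pos; lra).
      assert (M * Pi * v <= M * Pi * (M * u)) by (apply Rmult_le_compat_l; lra).
      nra.
    + assert (0 <= Theta * (M * u - Theta)) by (apply Rmult_le_pos; lra).
      assert (M * Pi * v <= M * Pi * Theta) by (apply Rmult_le_compat_l; lra). nra.
Qed.

Lemma F_bound x : 0 <= x -> Rabs (RInt s 0 x - Theta / Pi * x) <= Theta - Theta * Theta / (M * Pi).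
Proof.
  intros Hx.
  assert (Hx' : 0 <= x / Pi) by (apply Rdiv_le_0_compat; lra).
  destruct (nfloor_ex _ Hx') as [j [Hj1 Hj2]].
  assert (A1 : INR j * Pi <= x).
  { apply Rmult_le_compat_r with (r := Pi) in Hj1; [|lra].
    replace (x / Pi * Pi) with x in Hj1 by (field; lra). exact Hj1. }
  assert (A2 : x < INR (S j) * Pi).
  { rewrite S_INR. apply Rmult_lt_compat_r with (r := Pi) in Hj2; [|lra].
    replace (x / Pi * Pi) with x in Hj2 by (field; lra). exact Hj2. }
  assert (Hj0 : 0 <= INR j * Pi) by (pose proof (pos_INR j); nra).
  pose proof (chasles 0 (INR j * Pi) x (Rle_refl 0) Hj0 A1) as C1.
  pose proof (chasles 0 x (INR (S j) * Pi) (Rle_refl 0) Hx (Rlt_le _ _ A2)) as C2.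
  rewrite F_period, C1, F_period in C2. rewrite C1, F_period.
  pose proof (int_bounds _ _ Hj0 A1) as B1.
  pose proof (int_bounds x (INR (S j) * Pi) Hx (Rlt_le _ _ A2)) as B2.
  rewrite S_INR in C2, B2, A2.
  replace (INR j * Theta + RInt s (INR j * Pi) x - Theta / Pi * x)
    with (RInt s (INR j * Pi) x - Theta * (x - INR j * Pi) / Pi) by (field; lra).
  apply arith_c with (w := RInt s x ((INR j + 1) * Pi)); try lra.
Qed.

Lemma supply_lower t0 t : 0 <= t0 -> 0 <= t ->
  Theta / Pi * t - 2 * (Theta - Theta * Theta / (M * Pi)) <= RInt s t0 (t0 + t).
Proof.
  intros H0 Ht.
  pose proof (F_bound t0 H0) as B0. pose proof (F_bound (t0 + t) ltac:(lra)) as B1.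
  rewrite (chasles 0 t0 (t0 + t)) in B1 by lra.
  apply Rabs_le_between in B0; apply Rabs_le_between in B1. lra.
Qed.
End Supply.

Section Exist.
Variables (Pi Theta : R) (m : nat).
Hypothesis HPi : 0 < Pi.
Hypothesis Hm : (0 < m)%nat.
Hypothesis HTh : 0 <= Theta.
Hypothesis HTh2 : Theta <= INR m * Pi.
Let M := INR m.

Definition inon (t : R) : Prop := exists j : nat, INR j * Pi <= t < INR j * Pi + Theta / M.
Definition s0 (t : R) : R := if excluded_middle_informative (inon t) then M else 0.

Lemma HM : 0 < M. Proof. apply lt_0_INR; auto. Qed.
Lemma HTM : Theta / M <= Pi.
Proof. pose proof HM. apply Rmult_le_reg_r with M; auto. unfold Rdiv; rewrite Rmult_assoc, Rinv_l by lra. unfold M in *; lra. Qed.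
Lemma HTM0 : 0 <= Theta / M.
Proof. pose proof HM. apply Rdiv_le_0_compat; lra. Qed.

Lemma s0_on t : inon t -> s0 t = M.
Proof. intros H; unfold s0; destruct excluded_middle_informative; tauto. Qed.
Lemma s0_off t : ~ inon t -> s0 t = 0.
Proof. intros H; unfold s0; destruct excluded_middle_informative; tauto. Qed.

Lemma exists_N b : exists N : nat, b < INR N * Pi.
Proof.
  assert (0 <= Rmax 0 (b / Pi)) by apply Rmax_l.
  destruct (nfloor_ex _ H) as [n [_ Hn]]. exists (S n). rewrite S_INR.
  assert (b / Pi < INR n + 1) by (pose proof (Rmax_r 0 (b/Pi)); lra).
  apply Rmult_lt_compat_r with (r := Pi) in H0; auto.
  replace (b / Pi * Pi) with b in H0 by (field; lra). exact H0.
Qed.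

Lemma s0_pc : piecewise_constant s0.
Proof.
  intros a b Ha Hab. destruct (exists_N b) as [N HN].
  exists (map (fun j => INR j * Pi) (seq 0 N) ++ map (fun j => INR j * Pi + Theta / M) (seq 0 N)).
  intros x y Hx Hxy Hy Hp.
  assert (HjN : forall j, INR j * Pi <= b -> In j (seq 0 N)).
  { intros j Hj. apply in_seq. split; [lia|]. simpl.
    apply INR_lt. apply Rmult_lt_reg_r with Pi; auto. lra. }
  destruct (classic (inon x)) as [hx|hx]; destruct (classic (inon y)) as [hy|hy].
  - rewrite !s0_on; auto.
  - exfalso. destruct hx as [j Hj]. apply hy. exists j.
    assert (~ (x <= INR j * Pi + Theta / M <= y)).
    { apply Hp. apply in_or_app; right. apply in_map_iff. exists j; split; auto. apply HjN; lra. }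
    lra.
  - exfalso. destruct hy as [j Hj]. apply hx. exists j.
    assert (~ (x <= INR j * Pi <= y)).
    { apply Hp. apply in_or_app; left. apply in_map_iff. exists j; split; auto. apply HjN; lra. }
    lra.
  - rewrite !s0_off; auto.
Qed.

Lemma s0_period j : RInt s0 (INR j * Pi) (INR (S j) * Pi) = Theta.
Proof.
  pose proof HTM; pose proof HTM0; pose proof HM.
  set (c := INR j * Pi + Theta / M).
  assert (I1 : is_RInt s0 (INR j * Pi) c ((c - INR j * Pi) * M)).
  { pose proof (is_RInt_const (V:=R_NormedModule) (INR j * Pi) c M) as K.
    refine (is_RInt_ext _ _ _ _ _ _ K).
    rewrite Rmin_left, Rmax_right by (unfold c; lra). intros x Hx.
    symmetry; apply s0_on. exists j. unfold c in Hx; lra. }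
  assert (I2 : is_RInt s0 c (INR (S j) * Pi) ((INR (S j) * Pi - c) * 0)).
  { pose proof (is_RInt_const (V:=R_NormedModule) c (INR (S j) * Pi) 0) as K.
    refine (is_RInt_ext _ _ _ _ _ _ K).
    rewrite S_INR. rewrite Rmin_left, Rmax_right by (unfold c; lra). intros x Hx.
    symmetry; apply s0_off. intros [j' Hj'].
    destruct (Compare_dec.le_lt_dec j' j) as [h|h].
    - apply le_INR in h. unfold c in Hx. assert (INR j' * Pi <= INR j * Pi) by nra. lra.
    - apply le_INR in h. rewrite S_INR in h. assert ((INR j + 1) * Pi <= INR j' * Pi) by nra. lra. }
  pose proof (is_RInt_Chasles _ _ _ _ _ _ I1 I2) as I3.
  rewrite (is_RInt_unique _ _ _ _ I3).
  change (plus ((c - INR j * Pi) * M) ((INR (S j) * Pi - c) * 0))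
    with ((c - INR j * Pi) * M + (INR (S j) * Pi - c) * 0).
  unfold c. rewrite S_INR. match goal with |- ?a = ?b => change (@eq R a b) end. field. lra.
Qed.

Lemma s0_pattern : supply_pattern Pi Theta m s0.
Proof.
  split; [apply s0_pc|split].
  - intros t _. destruct (classic (inon t)).
    + exists m; split; auto. rewrite s0_on; auto.
    + exists 0%nat; split; [lia|]. rewrite s0_off; auto.
  - apply s0_period.
Qed.
End Exist.

Lemma sbf_lower Pi Theta m t : 0 < Pi -> (0 < m)%nat -> 0 <= Theta -> Theta <= INR m * Pi -> 0 <= t ->
  Theta / Pi * t - 2 * (Theta - Theta * Theta / (INR m * Pi)) <= sbf Pi Theta m t.
Proof.
  intros HPi Hm HT HT2 Ht. unfold sbf.
  set (E := fun x => exists s t0, supply_pattern Pi Theta m s /\ 0 <= t0 /\ x = RInt s t0 (t0 + t)).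
  destruct (Glb_Rbar_correct E) as [Hlb Hgr].
  assert (Ex : E (RInt (s0 Pi Theta m) 0 (0 + t))).
  { exists (s0 Pi Theta m), 0; split; [apply s0_pattern; auto|split; [lra|reflexivity]]. }
  assert (Hl : Rbar_le (Theta / Pi * t - 2 * (Theta - Theta * Theta / (INR m * Pi))) (Glb_Rbar E)).
  { apply Hgr. intros x [s [t0 [Hs [Ht0 ->]]]]. simpl. apply supply_lower; auto. }
  pose proof (Hlb _ Ex) as Hu.
  change (Theta / Pi * t - 2 * (Theta - Theta * Theta / (INR m * Pi)) <= real (Glb_Rbar E)).
  destruct (Glb_Rbar E); simpl in *; tauto.
Qed.

Lemma rmin_diff a c x : 0 <= c -> Rmin a x - Rmin (a - c) x <= c.
Proof. intros; unfold Rmin; destruct Rle_dec; destruct Rle_dec; lra. Qed.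

Section Dem.
Variables (n : nat) (T C D : nat -> R) (k : nat) (A : R).
Hypothesis Htask : forall i, (i < n)%nat -> 0 < C i /\ C i <= D i /\ D i <= T i.
Hypothesis HA : 0 <= A.
Hypothesis Hk : (k < n)%nat.

Lemma CI_bounds i : (i < n)%nat -> 0 <= CI (T i) (C i) (D i) (A + D k) <= C i.
Proof.
  intros Hi; destruct (Htask i Hi) as [h1 _]. unfold CI. split.
  - apply Rmin_glb; [lra|apply Rmax_l].
  - apply Rmin_l.
Qed.

Lemma nJC_le i : (i < n)%nat ->
  nJ (T i) (D i) (A + D k) * C i <= (A + D k) * (C i / T i) + (T i - D i) * C i / T i.
Proof.
  intros Hi; destruct (Htask i Hi) as [h1 [h2 h3]].
  unfold nJ, floorR. destruct (base_Int_part ((A + D k + T i - D i) / T i)) as [b _].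
  replace ((A + D k) * (C i / T i) + (T i - D i) * C i / T i)
    with ((A + D k + T i - D i) / T i * C i) by (field; lra).
  apply Rmult_le_compat_r; lra.
Qed.

Lemma Ihat_le i : (i < n)%nat ->
  Ihat T C D k A i <= (A + D k) * (C i / T i) + (T i - D i) * C i / T i.
Proof.
  intros Hi. pose proof (nJC_le i Hi). destruct (Htask i Hi) as [h1 [h2 h3]].
  destruct (Htask k Hk) as [k1 [k2 k3]].
  unfold Ihat, W; destruct (Nat.eqb i k) eqn:E.
  - apply Nat.eqb_eq in E; subst i.
    eapply Rle_trans; [apply Rmin_l|]. lra.
  - eapply Rle_trans; [apply Rmin_l|]. lra.
Qed.

Lemma diff_le i : (i < n)%nat -> Ibar T C D k A i - Ihat T C D k A i <= C i.
Proof.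
  intros Hi. pose proof (CI_bounds i Hi) as [c1 c2].
  unfold Ibar, Ihat; destruct (Nat.eqb i k) eqn:E.
  - apply Nat.eqb_eq in E; subst i.
    eapply Rle_trans; [|exact c2].
    replace (W (T k) (C k) (D k) (A + D k) - C k - CI (T k) (C k) (D k) (A + D k))
      with (W (T k) (C k) (D k) (A + D k) - C k - CI (T k) (C k) (D k) (A + D k)) by ring.
    apply rmin_diff; auto.
  - eapply Rle_trans; [|exact c2]. apply rmin_diff; auto.
Qed.

Lemma dem_upper m :
  dem n T C D k A m <= INR m * C k + (A + D k) * sumR n (fun i => C i / T i)
     + sumR n (fun i => (T i - D i) * C i / T i) + sum_largest (m - 1) n C.
Proof.
  unfold dem.
  pose proof (sumR_le n (Ihat T C D k A) (fun i => (A + D k) * (C i / T i) + (T i - D i) * C i / T i) Ihat_le) as S1.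
  rewrite (sumR_lin n (A + D k) (fun i => C i / T i) (fun i => (T i - D i) * C i / T i)) in S1.
  pose proof (sum_largest_mono (m - 1) n _ C diff_le) as S2.
  lra.
Qed.
End Dem.

Theorem theorem2 (n : nat) (T C D : nat -> R) (m : nat) (Pi Theta : R) (k : nat) :
  (forall i, (i < n)%nat -> 0 < C i /\ C i <= D i /\ D i <= T i) ->
  (0 < m)%nat ->
  0 < Pi -> 0 <= Theta -> Theta <= INR m * Pi ->
  sumR n (fun i => C i / T i) < Theta / Pi ->
  (k < n)%nat ->
  let Utau := sumR n (fun i => C i / T i) in
  let CSigma := sum_largest (m - 1) n C in
  let U := sumR n (fun i => (T i - D i) * C i / T i) in
  let B := Theta / Pi * (2 + 2 * (Pi - Theta / INR m)) in
  (exists A, 0 <= A /\ dem n T C D k A m > sbf Pi Theta m (A + D k)) ->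
  exists A, 0 <= A /\ dem n T C D k A m > sbf Pi Theta m (A + D k) /\
    A < (CSigma + INR m * C k - D k * (Theta / Pi - Utau) + U + B)
        / (Theta / Pi - Utau).
Proof.
  intros Htask Hm HPi HT HT2 HU Hk Utau CSigma U B [A [HA Hd]].
  exists A; split; auto; split; auto.
  apply Rnot_le_lt; intros HX.
  assert (Hdel : 0 < Theta / Pi - Utau) by (unfold Utau; lra).
  assert (HM : 0 < INR m) by (apply lt_0_INR; auto).
  destruct (Htask k Hk) as [k1 [k2 k3]].
  apply Rmult_le_compat_r with (r := Theta / Pi - Utau) in HX; [|lra].
  unfold Rdiv at 1 in HX. rewrite Rmult_assoc, Rinv_l in HX by lra. rewrite Rmult_1_r in HX.
  pose proof (dem_upper n T C D k A Htask Hk m) as DU. fold Utau U CSigma in DU.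
  pose proof (sbf_lower Pi Theta m (A + D k) HPi Hm HT HT2 ltac:(lra)) as SL.
  assert (EB : B = 2 * (Theta / Pi) + 2 * (Theta - Theta * Theta / (INR m * Pi))).
  { unfold B. field. lra. }
  assert (0 <= Theta / Pi) by (apply Rdiv_le_0_compat; lra).
  assert (E2 : (A + D k) * Utau = Theta / Pi * (A + D k) - (A + D k) * (Theta / Pi - Utau)) by ring.
  assert (E3 : (A + D k) * (Theta / Pi - Utau) = A * (Theta / Pi - Utau) + D k * (Theta / Pi - Utau)) by ring.
  lra.
Qed.
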